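(* Let $k$ be a field, $R=k[x_1,\ldots,x_n]$, and let $I$ be an almost reverse lexicographic ideal whose last generator is $M_\omega=x_1^{\omega_1}\cdots x_\mu^{\omega_\mu}$ with $\omega_\mu>0$, $\mu\ge2$. Let $1\le i\le\mu-1$. For every $\alpha\in\mathcal{I}_{i-1}$ and every $\beta\in\mathcal{I}_i$, \[|\alpha|+f_i(\alpha)\le f_i(0)\le|\beta|+f_{i+1}(\beta),\] where $0\in\mathbb{Z}^{i-1}$ is the zero tuple. In particular, if $N,M\in\mathcal{G}(I)$ with $\max N<\max M$, then $\deg N\le\deg M$.
   Context: Monomial order: degree reverse lexicographic: for $M=x^\alpha,N=x^\beta$, $M>N$ iff $\deg M>\deg N$, or degrees are equal and for the largest $s$ with $\alpha_s\neq\beta_s$ one has $\alpha_s<\beta_s$. For $\alpha\in\mathbb{Z}^s_{\ge0}$, $x^\alpha=x_1^{\alpha_1}\cdots x_s^{\alpha_s}$, $|\alpha|=\sum\alpha_j$, and $\alpha\le\beta$ iff $x^\alpha\le x^\beta$. Almost reverse lexicographic: for every monomial $M$ and every minimal monomial generator $N$ of $I$ with $\deg M=\deg N$ and $M>N$, $M\in I$. $\mathcal{G}(I)$ is the minimal monomial generating set; $\max M$ is the largest $i$ with $x_i\mid M$. The last generator $M_\omega$ is the element of $\mathcal{G}(I)$ of maximal degree that is smallest in the order among elements of $\mathcal{G}(I)$ of that degree; $\mu=\max M_\omega$. $f_1=\min\{t:x_1^t\in I\}$; for $2\le i\le\mu$, $\alpha\in\mathbb{Z}^{i-1}_{\ge0}$,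 $f_i(\alpha)=\min\{t\ge0:x^\alpha x_i^t\in I\}$. For $1\le i\le\mu-2$, $\mathcal{I}_i=\{(\alpha_1,\ldots,\alpha_i)\in\mathbb{Z}^i_{\ge0}: 0\le\alpha_1<f_1,\ 0\le\alpha_j<f_j(\alpha_1,\ldots,\alpha_{j-1})\ (2\le j\le i)\}$, and $\mathcal{I}_{\mu-1}$ is the set of $(\alpha_1,\ldots,\alpha_{\mu-1})$ satisfying these inequalities for $j\le\mu-1$ together with $(\alpha_1,\ldots,\alpha_{\mu-1})\ge(\omega_1,\ldots,\omega_{\mu-1})$. Convention: $\mathcal{I}_0$ consists of the empty tuple $0\in\mathbb{Z}^0$, with $|0|=0$ and $f_1(0)=f_1$. *)

(* Defs.v *)
From mathcomp Require Import all_boot all_algebra.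
From mathcomp Require Import mpoly.
From Stdlib Require Import ClassicalEpsilon.

Set Implicit Arguments.
Unset Strict Implicit.
Unset Printing Implicit Defensive.

Import GRing.Theory.
Local Open Scope ring_scope.

(* Variables: x_1,...,x_n correspond to the indices 0,...,n-1 of 'I_n.
   A monomial x^a is 'X_[a] with a : 'X_{1..n}; its degree is mdeg a. *)

Section MonomialIdeals.
Variables (k : fieldType) (n : nat).

Definition is_ideal (I : {pred {mpoly k[n]}}) : Prop :=
  [/\ 0 \in I,
      (forall p q, p \in I -> q \in I -> p + q \in I) &
      (forall r p, p \in I -> r * p \in I)].

(* monomial ideal: an ideal generated by monomials, equivalently an ideal
   containing every monomial occurring in each of its elements *)
Definition is_monomial_ideal (I : {pred {mpoly k[n]}}) : Prop :=
  is_ideal I /\ (forall p, p \in I -> forall m, m \in msupp p -> 'X_[m] \in I).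

Definition revlex_gt (a b : 'X_{1..n}) : bool :=
  (mdeg b < mdeg a)%N ||
  ((mdeg a == mdeg b) &&
   [exists s : 'I_n, (a s < b s)%N &&
                     [forall t : 'I_n, (s < t)%N ==> (a t == b t)]]).

Definition revlex_ge (a b : 'X_{1..n}) : bool := (a == b) || revlex_gt a b.

Definition mdiv (a b : 'X_{1..n}) : bool := [forall i : 'I_n, (a i <= b i)%N].

Definition mingen (I : {pred {mpoly k[n]}}) (m : 'X_{1..n}) : Prop :=
  'X_[m] \in I /\ (forall m', 'X_[m'] \in I -> mdiv m' m -> m' = m).

Definition almost_revlex (I : {pred {mpoly k[n]}}) : Prop :=
  forall M N : 'X_{1..n}, mingen I N -> mdeg M = mdeg N -> revlex_gt M N ->
    'X_[M] \in I.

Definition last_generator (I : {pred {mpoly k[n]}}) (w : 'X_{1..n}) : Prop :=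
  [/\ mingen I w,
      (forall N, mingen I N -> (mdeg N <= mdeg w)%N) &
      (forall N, mingen I N -> mdeg N = mdeg w -> N <> w -> revlex_gt N w)].

(* max M : largest (1-based) i with x_i | M, 0 for M = 1 *)
Definition maxvar (m : 'X_{1..n}) : nat := \max_(i < n | (0 < m i)%N) i.+1.

(* the tuple (a_1,...,a_j), viewed as a monomial in x_1..x_j *)
Definition trunc (j : nat) (a : 'X_{1..n}) : 'X_{1..n} :=
  [multinom (if (i < j)%N then a i else 0%N) | i < n].

(* x^a * x_i^t  (i is 1-based) *)
Definition mulxi (a : 'X_{1..n}) (i t : nat) : 'X_{1..n} :=
  [multinom (a j + (if (j.+1 == i)%N then t else 0%N))%N | j < n].

(* f_i(a) = min{t >= 0 : x^a x_i^t \in I}  (0 if no such t; junk value) *)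
Definition fI (I : {pred {mpoly k[n]}}) (i : nat) (a : 'X_{1..n}) : nat :=
  match excluded_middle_informative
          (exists t : nat, 'X_[mulxi a i t] \in I) with
  | left ex => ex_minn ex
  | right _ => 0%N
  end.

(* the set \mathcal{I}_j (j >= 0), tuples of length j encoded as monomials
   supported on x_1..x_j; mu = max M_w *)
Definition calI (I : {pred {mpoly k[n]}}) (w : 'X_{1..n}) (mu j : nat)
    (a : 'X_{1..n}) : Prop :=
  [/\ forall l : 'I_n, (j <= l)%N -> a l = 0%N,
      forall l : 'I_n, (l < j)%N -> (a l < fI I l.+1 (trunc l a))%N &
      (j = mu.-1 -> revlex_ge a (trunc mu.-1 w))].

End MonomialIdeals.

(* Main.v *)
Require Import Defs.
From mathcomp Require Import all_boot all_algebra.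
From mathcomp Require Import mpoly.
From mathcomp Require Import zify.
From Stdlib Require Import Classical ClassicalEpsilon.
Set Implicit Arguments.
Unset Strict Implicit.
Unset Printing Implicit Defensive.
Section Aux.
Variable n : nat.
Implicit Types a b c m : 'X_{1..n}.

Lemma mdiv_eq a b : mdiv a b -> (mdeg b <= mdeg a)%N -> a = b.
Proof.
move=> /forallP H Hd.
have E : b = (a + (b - a))%MM.
  apply/mnmP=> i; rewrite mnmDE mnmBE; have := H i; lia.
move: Hd; rewrite E mdegD => Hd.
have /eqP : mdeg (b - a)%MM = 0%N by lia.
rewrite mdeg_eq0 => /eqP Z.
by rewrite Z addm0.
Qed.

Lemma mdiv_trans a b c : mdiv a b -> mdiv b c -> mdiv a c.
Proof.
move=> /forallP H1 /forallP H2; apply/forallP=> i.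
exact: leq_trans (H1 i) (H2 i).
Qed.

Lemma mdiv_refl a : mdiv a a.
Proof. by apply/forallP. Qed.

Lemma mdivP a b : reflect (forall i, a i <= b i)%N (mdiv a b).
Proof. exact: forallP. Qed.

Lemma div_exists k m : (k <= mdeg m)%N ->
  exists c, mdiv c m /\ mdeg c = (mdeg m - k)%N.
Proof.
elim: k => [|k IH] Hk.
  by exists m; split; [apply: mdiv_refl | rewrite subn0].
have [c [Hc Hdc]] := IH (ltnW Hk).
have : c != 0%MM by rewrite -mdeg_eq0 Hdc; apply/eqP; lia.
case: (boolP [exists j, c j != 0%N]); last first.
  move=> /existsPn Hn /eqP []; apply/mnmP=> i; rewrite mnm0E.
  by have := Hn i; rewrite negbK => /eqP.
move=> /existsP [j Hj] _.
exists (c - U_(j))%MM; split.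
  apply/mdivP=> i; rewrite mnmBE; apply: leq_trans (leq_subr _ _) _.
  exact: (mdivP _ _ Hc).
have E : c = ((c - U_(j)) + U_(j))%MM.
  apply/mnmP=> i; rewrite mnmDE mnmBE mnm1E.
  case: (eqVneq j i) => [<-|]; rewrite /=; [move: Hj|]; lia.
move: Hdc; rewrite {1}E mdegD mdeg1. lia.
Qed.

Lemma div_exists' e m : (e <= mdeg m)%N -> exists c, mdiv c m /\ mdeg c = e.
Proof.
move=> He; have [c [H1 H2]] := @div_exists (mdeg m - e) m (leq_subr _ _).
by exists c; split => //; rewrite H2; lia.
Qed.

End Aux.
Section Ideal.
Variables (k : fieldType) (n : nat) (I : {pred {mpoly k[n]}}).
Implicit Types a b c m N M : 'X_{1..n}.

Lemma mul_in c m : is_monomial_ideal I -> 'X_[c] \in I -> mdiv c m -> 'X_[m] \in I.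
Proof.
move=> [[_ _ Hm] _] Hc /mdivP Hd.
have -> : m = ((m - c) + c)%MM by apply/mnmP=> i; rewrite mnmDE mnmBE; have := Hd i; lia.
by rewrite mpolyXD; apply: Hm.
Qed.

Lemma mingen_exists m : 'X_[m] \in I -> exists N, mingen I N /\ mdiv N m.
Proof.
have [K HK] : exists K, (mdeg m < K)%N by exists (mdeg m).+1.
elim: K m HK => [//|K IH] m Hk Hm.
case: (classic (forall m', 'X_[m'] \in I -> mdiv m' m -> m' = m)) => H.
  by exists m; split => //; apply: mdiv_refl.
have [m' Hm'] := not_all_ex_not _ _ H.
have [H1 Hm2] := imply_to_and _ _ Hm'.
have [H2 H3] := imply_to_and _ _ Hm2.
have Hlt : (mdeg m' < mdeg m)%N.
  rewrite ltnNge; apply/negP => Hle; exact: H3 (mdiv_eq H2 Hle).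
have [N [HN HNd]] := IH m' (leq_trans Hlt Hk) H1.
by exists N; split => //; exact: mdiv_trans HNd H2.
Qed.

Lemma revlex_at M N (p : 'I_n) : mdeg M = mdeg N -> (M p < N p)%N ->
  (forall t : 'I_n, (p < t)%N -> M t = N t) -> revlex_gt M N.
Proof.
move=> Hd Hp Ht; apply/orP; right; apply/andP; split; first by apply/eqP.
apply/existsP; exists p; rewrite Hp /=; apply/forallP => t; apply/implyP => H.
by rewrite Ht.
Qed.

Lemma G_div N m (p : 'I_n) : almost_revlex I -> mingen I N ->
  (mdeg N <= mdeg m)%N -> (m p < N p)%N ->
  (forall t : 'I_n, (p < t)%N -> m t = 0%N) ->
  (forall t : 'I_n, (p < t)%N -> N t = 0%N) ->
  exists c, [/\ mdiv c m, mdeg c = mdeg N & 'X_[c] \in I].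
Proof.
move=> Har HN Hd Hp Hm HNt.
have [c [Hc Hdc]] := div_exists' Hd.
exists c; split => //; apply: (Har c N HN Hdc).
apply: (revlex_at (p := p)) => //.
  exact: leq_ltn_trans (mdivP _ _ Hc p) Hp.
move=> t Ht; rewrite HNt //; have := mdivP _ _ Hc t; rewrite Hm //; lia.
Qed.

Lemma G_in N m (p : 'I_n) : is_monomial_ideal I -> almost_revlex I -> mingen I N ->
  (mdeg N <= mdeg m)%N -> (m p < N p)%N ->
  (forall t : 'I_n, (p < t)%N -> m t = 0%N) ->
  (forall t : 'I_n, (p < t)%N -> N t = 0%N) ->
  'X_[m] \in I.
Proof.
move=> Hmi Har HN Hd Hp Hm HNt.
have [c [H1 H2 H3]] := G_div Har HN Hd Hp Hm HNt.
exact: mul_in Hmi H3 H1.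
Qed.

End Ideal.
Section Misc.
Variables (k : fieldType) (n : nat) (I : {pred {mpoly k[n]}}).
Implicit Types a b c m N M : 'X_{1..n}.

Lemma mulxiE a i t (j : 'I_n) :
  mulxi a i t j = (a j + (if j.+1 == i then t else 0))%N.
Proof. by rewrite /mulxi mnmE. Qed.

Lemma truncE j a (l : 'I_n) : trunc j a l = if (l < j)%N then a l else 0%N.
Proof. by rewrite /trunc mnmE. Qed.

Lemma mdeg_mulxi (q : 'I_n) a t : mdeg (mulxi a q.+1 t) = (mdeg a + t)%N.
Proof.
have -> : mulxi a q.+1 t = (a + U_(q) *+ t)%MM.
  apply/mnmP=> j; rewrite mulxiE mnmDE mulmnE mnm1E eqSS.
  rewrite (_ : (q == j) = (nat_of_ord j == q)) ?(eq_sym q j) //; case: (nat_of_ord j == q) => /=; lia.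
by rewrite mdegD mdegMn mdeg1 mul1n.
Qed.

Lemma mdiv_mdeg a b : mdiv a b -> (mdeg a <= mdeg b)%N.
Proof. by move=> /mdivP H; rewrite !mdegE; apply: leq_sum => i _. Qed.

Lemma maxvar_zero m (t : 'I_n) : (maxvar m <= t)%N -> m t = 0%N.
Proof.
move=> H; apply/eqP; rewrite eqn0Ngt; apply/negP => Ht.
have := @leq_bigmax_cond _ (fun i : 'I_n => 0 < m i)%N (fun i : 'I_n => i.+1) t Ht.
rewrite -/(maxvar m); lia.
Qed.

Lemma maxvar_pos m : (0 < maxvar m)%N ->
  exists p : 'I_n, p.+1 = maxvar m /\ (0 < m p)%N.
Proof.
rewrite /maxvar; case: (pickP (fun i : 'I_n => 0 < m i)%N) => [i0 Pi0 _|Hn].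
  rewrite (bigmax_eq_arg i0) //; case: arg_maxnP => //= i Pi _.
  by exists i.
move=> H; exfalso; move: H; rewrite lt0n => /negP; apply.
by rewrite -leqn0; apply/bigmax_leqP => i; rewrite Hn.
Qed.

Lemma fI_in i a : (exists t, 'X_[mulxi a i t] \in I) -> 'X_[mulxi a i (fI I i a)] \in I.
Proof.
rewrite /fI => H; case: excluded_middle_informative => [ex|//].
by case: ex_minnP.
Qed.

Lemma fI_min i a t : 'X_[mulxi a i t] \in I -> (fI I i a <= t)%N.
Proof.
rewrite /fI => H; case: excluded_middle_informative => [ex|nex].
  by case: ex_minnP => m _ Hm; apply: Hm.
by exfalso; apply: nex; exists t.
Qed.

Lemma fI_notin i a s : (s < fI I i a)%N -> 'X_[mulxi a i s] \notin I.
Proof.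
move=> H; apply/negP => Hin; have := fI_min Hin; lia.
Qed.

Lemma trunc_mulxi (q : 'I_n) a : (forall l : 'I_n, (q < l)%N -> a l = 0%N) ->
  mulxi (trunc q a) q.+1 (a q) = a.
Proof.
move=> H; apply/mnmP=> j; rewrite mulxiE truncE eqSS.
case: (ltngtP j q) => Hj.
- by rewrite addn0.
- by rewrite H.
- by have -> : j = q by apply: val_inj.
Qed.

Lemma calI_notin w mu j (q : 'I_n) a : calI I w mu j a -> j = q.+1 -> 'X_[a] \notin I.
Proof.
move=> [H1 H2 _] Hj.
have Hq : (q < j)%N by rewrite Hj.
have := fI_notin (H2 q Hq); rewrite trunc_mulxi //.
move=> l Hl; apply: H1; rewrite Hj; exact: Hl.
Qed.

End Misc.
Unset Implicit Arguments.
Theorem corollary2p13 (k : fieldType) (n : nat) (I : {pred {mpoly k[n]}})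
  (w : 'X_{1..n}) :
  is_monomial_ideal I -> almost_revlex I -> last_generator I w ->
  (2 <= maxvar w)%N ->
  (forall i : nat, (1 <= i)%N -> (i <= (maxvar w).-1)%N ->
     forall a b : 'X_{1..n},
       calI I w (maxvar w) i.-1 a -> calI I w (maxvar w) i b ->
       (mdeg a + fI I i a <= fI I i 0%MM)%N /\
       (fI I i 0%MM <= mdeg b + fI I i.+1 b)%N) /\
  (forall N M : 'X_{1..n}, mingen I N -> mingen I M ->
     (maxvar N < maxvar M)%N -> (mdeg N <= mdeg M)%N).
Proof.
move=> Hmi Har [Hw Hwmax Hwlast] Hmu.
split; last first.
  move=> N M HN HM Hlt; rewrite leqNgt; apply/negP => Hd.
  have [q [Hq HMq]] := maxvar_pos (leq_ltn_trans (leq0n _) Hlt).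
  have HNz : forall t : 'I_n, (q <= t)%N -> N t = 0%N.
    by move=> t Ht; apply: maxvar_zero; lia.
  have HMz : forall t : 'I_n, (q < t)%N -> M t = 0%N.
    by move=> t Ht; apply: maxvar_zero; lia.
  have Hq0 : (N q < M q)%N by rewrite HNz.
  have [c [Hc1 Hc2 Hc3]] := G_div (p := q) Har HM (ltnW Hd)
     Hq0 (fun t Ht => HNz t (ltnW Ht)) HMz.
  have := HN.2 c Hc3 Hc1; move=> E; move: Hc2; rewrite E; lia.
have [p [Hp Hwp]] := maxvar_pos (leq_trans (isT : (0 < 2)%N) Hmu).
have Hwz : forall t : 'I_n, (p < t)%N -> w t = 0%N.
  by move=> t Ht; apply: maxvar_zero; lia.
have X0 : 'X_[0%MM] \notin I.
  apply/negP => H0; have Hd0 : mdiv 0%MM w by apply/mdivP => i; rewrite mnm0E.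
  have E := Hw.2 0%MM H0 Hd0.
  by move: Hwp; rewrite -E mnm0E.
have Hxd : forall q : 'I_n, (q < p)%N -> 'X_[mulxi 0%MM q.+1 (mdeg w)] \in I.
  move=> q Hq; apply: (G_in (p := p) Hmi Har Hw).
  - by rewrite mdeg_mulxi mdeg0.
  - rewrite mulxiE mnm0E /=; case: eqP => [/eqP|_]; [rewrite eqSS; lia|done].
  - move=> t Ht; rewrite mulxiE mnm0E /=; case: eqP => [/eqP|_]; [rewrite eqSS; lia|done].
  - exact: Hwz.
move=> i Hi1 Hip a b Ha Hb.
rewrite -Hp /= in Hip.
have Hin : (i < n)%N by have := ltn_ord p; lia.
have [ii Eii] : exists ii : 'I_n, i = ii.+1.
  by exists (Ordinal (leq_ltn_trans (leq_pred i) Hin)) => /=; lia.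
subst i; set i0 := Ordinal Hin.
have Hiip : (ii < p)%N by lia.
have Hex : exists t, 'X_[mulxi 0%MM ii.+1 t] \in I by exists (mdeg w); exact: Hxd.
set t0 := fI I ii.+1 0%MM.
have Ht0in := fI_in Hex; rewrite -/t0 in Ht0in.
have Ht0pos : (0 < t0)%N.
  rewrite lt0n; apply/negP => /eqP E; move: Ht0in; rewrite E.
  have -> : mulxi (0%MM : 'X_{1..n}) ii.+1 0 = 0%MM.
    by apply/mnmP=> j; rewrite mulxiE mnm0E; case: ifP.
  by apply/negP.
have HN0 : mingen I (mulxi 0%MM ii.+1 t0).
  split => // m' Hm' Hdiv.
  have Em' : m' = mulxi 0%MM ii.+1 (m' ii).
    apply/mnmP=> j; rewrite mulxiE mnm0E add0n eqSS.
    case: (eqVneq (nat_of_ord j) ii) => [E|E].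
      by have -> : j = ii by apply: val_inj.
    have := mdivP _ _ Hdiv j; rewrite mulxiE mnm0E eqSS (negbTE E); lia.
  apply: mdiv_eq => //; rewrite Em' !mdeg_mulxi !mdeg0 /=.
  rewrite Em' in Hm'; exact: fI_min Hm'.
have HN0ii : mulxi 0%MM ii.+1 t0 ii = t0 by rewrite mulxiE mnm0E eqxx.
have HN0z : forall t : 'I_n, (ii < t)%N -> mulxi 0%MM ii.+1 t0 t = 0%N.
  move=> t Ht; rewrite mulxiE mnm0E eqSS; case: eqP => //; lia.
split.
-
  move: Ha => [Ha1 Ha2 Ha3]; simpl in Ha1.
  have Haz : forall t : 'I_n, (ii <= t)%N -> a t = 0%N by move=> t; apply: Ha1.
  case: (posnP (mdeg a)) => Hda.
    move/eqP: Hda; rewrite mdeg_eq0 => /eqP ->; rewrite mdeg0 add0n; exact: leqnn.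
  case: (leqP t0 (mdeg a)) => Hat.
    exfalso.
    have Hnot : 'X_[a] \notin I.
      case: (posnP (nat_of_ord ii)) => Hii.
        exfalso; move: Hda; have -> : a = 0%MM.
          by apply/mnmP=> j; rewrite mnm0E; apply: Haz; rewrite Hii.
        by rewrite mdeg0.
      have Hjn : (ii.-1 < n)%N by have := ltn_ord ii; lia.
      apply: (calI_notin (q := Ordinal Hjn) (And3 Ha1 Ha2 Ha3)) => /=; lia.
    move/negP: Hnot; apply.
    apply: (G_in (p := ii) Hmi Har HN0).
    - by rewrite mdeg_mulxi mdeg0.
    - by rewrite HN0ii Haz.
    - by move=> t Ht; apply: Haz; lia.
    - exact: HN0z.
  have HM : 'X_[mulxi a ii.+1 (t0 - mdeg a)] \in I.
    apply: (G_in (p := ii) Hmi Har HN0).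
    - by rewrite !mdeg_mulxi mdeg0; lia.
    - by rewrite HN0ii mulxiE eqxx Haz //; lia.
    - move=> t Ht; rewrite mulxiE eqSS Haz; last lia.
      by case: eqP => //; lia.
    - exact: HN0z.
  have := fI_min HM; lia.
-
  have Hbz : forall t : 'I_n, (ii < t)%N -> b t = 0%N.
    by move=> t Ht; case: Hb => Hb1 _ _; apply: Hb1.
  have Hbnot : 'X_[b] \notin I by apply: (calI_notin (q := ii) Hb).
  have Hex2 : exists t, 'X_[mulxi b ii.+2 t] \in I.
    case: (ltngtP ii.+1 p) => Hip'.
    + exists (mdeg w); apply: (mul_in Hmi (Hxd i0 Hip')).
      apply/mdivP=> j; rewrite !mulxiE mnm0E /=; case: ifP => _; lia.
    + lia.
    +
      have Eip : i0 = p by apply: val_inj.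
      have Hb3 : revlex_ge b (trunc p w).
        by case: Hb => _ _; rewrite -Hp /=; apply.
      have Ew : w = mulxi (trunc p w) p.+1 (w p) by rewrite trunc_mulxi.
      have Hdw : mdeg w = (mdeg (trunc p w) + w p)%N by rewrite {1}Ew mdeg_mulxi.
      have Hbzp : forall t : 'I_n, (p <= t)%N -> b t = 0%N.
        by move=> t Ht; apply: Hbz; lia.
      case: (ltnP (mdeg (trunc p w)) (mdeg b)) => Hdb.
        exists (w p).-1; rewrite (_ : ii.+2 = p.+1); last by rewrite -Hip'.
        apply: (G_in (p := p) Hmi Har Hw).
        - by rewrite mdeg_mulxi; lia.
        - by rewrite mulxiE Hbzp // eqxx; lia.
        - move=> t Ht; rewrite mulxiE Hbzp; last lia.
          by case: eqP => //; lia.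
        - exact: Hwz.
      exists (w p); rewrite (_ : ii.+2 = p.+1); last by rewrite -Hip'.
      move: Hb3; rewrite /revlex_ge => /orP [/eqP Eb|].
        by rewrite Eb -Ew; exact: Hw.1.
      rewrite /revlex_gt => /orP [Hlt|/andP [/eqP Hdeq /existsP [s /andP [Hs Hst]]]].
        lia.
      apply: (Har _ w Hw).
        by rewrite mdeg_mulxi Hdw Hdeq.
      rewrite [X in revlex_gt _ X]Ew.
      apply: (revlex_at (p := s)).
      - by rewrite !mdeg_mulxi Hdeq.
      - by rewrite !mulxiE ltn_add2r.
      - move=> t Ht; rewrite !mulxiE; congr (_ + _)%N.
        by have := forallP Hst t; rewrite Ht /= => /eqP.
  set t := fI I ii.+2 b.
  have Htin := fI_in Hex2; rewrite -/t in Htin.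
  rewrite leqNgt; apply/negP => Hlt.
  have [N [HN HNd]] := mingen_exists Htin.
  have HdN : (mdeg N <= mdeg b + t)%N.
    by have := mdiv_mdeg HNd; rewrite (mdeg_mulxi i0).
  have HNi0 : forall j : 'I_n, N j <= mulxi b ii.+2 t j := mdivP _ _ HNd.
  case: (posnP (N i0)) => HNi.
    move/negP: Hbnot; apply; apply: (mul_in Hmi HN.1).
    apply/mdivP=> j; have := HNi0 j; rewrite mulxiE.
    case: eqP => [Ej|_]; last lia.
    have -> : j = i0 by apply: val_inj => /=; lia.
    by rewrite HNi.
  have Hin2 : 'X_[mulxi 0%MM ii.+1 (mdeg N)] \in I.
    apply: (G_in (p := i0) Hmi Har HN).
    - by rewrite mdeg_mulxi mdeg0.
    - by rewrite mulxiE mnm0E /= eqSS; case: eqP => //; lia.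
    - move=> t' Ht'; rewrite /i0 /= in Ht'; rewrite mulxiE mnm0E /=; case: eqP => //; lia.
    - move=> t' Ht'; rewrite /i0 /= in Ht'; have := HNi0 t'; rewrite mulxiE Hbz /=; last lia.
      case: eqP => //=; lia.
  have := fI_min Hin2; rewrite -/t0; lia.
Qed.
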